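(* Let $\mathcal{F}$ be a closure system on a finite set $X$ with closure operator $\phi$, let $\Sigma$ be the canonical direct basis of $\mathcal{F}$, let $A\in\mathcal{F}$ be meet-irreducible with unique upper cover $A^*$ in $\mathcal{F}$, and write $A^*\setminus A=\{d_1,\dots,d_k\}$. Let $Y_1,\dots,Y_t$ be the minimal (with respect to inclusion) transversals of the hypergraph $H=\langle A,\mathcal{T}\rangle$, where $\mathcal{T}=\{A\setminus Z: Z\in\mathcal{F},\ Z\subsetneq A\}$, and let $\Sigma_1=\{Y_j\rightarrow d_i: j\leq t,\ i\leq k\}$. Then $\Sigma\cup\Sigma_1$ is a direct basis of the closure system $\mathcal{F}^*=\mathcal{F}\setminus\{A\}$.
   Context: A closure system on $X$ is a family of subsets of $X$ containing $X$ and closed under intersections; its closure operator maps $Y$ to the smallest member containing $Y$. An implication $C\rightarrow d$ ($C\subseteq X$, $d\in X$) holds on $Y$ if $C\not\subseteq Y$ or $d\in Y$. A set $\Sigma$ of implications is a basis of a closure system $\mathcal{G}$ if $\mathcal{G}$ is exactly the family of subsets satisfying all implications of $\Sigma$; it is direct if moreover, with $\psi$ the closure operator of $\mathcal{G}$, $\psi(Y)=Y\cup\{d:(C\rightarrow d)\in\Sigma,\ C\subseteq Y\}$ for all $Y\subseteq X$. The canonical direct basis of $\mathcal{F}$ is the set of all $C\rightarrow d$ with $d\notin C$, $d\in\phi(C)$, and $d\notin\phi(C')$ for all $C'\subsetneq C$. $A\in\mathcal{F}$ is meet-irreducible if $A\neq X$ and $A$ has a unique upper cover in $\mathcal{F}$.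 A hypergraph is a pair $\langle B,\mathcal{B}\rangle$ with $\mathcal{B}\subseteq 2^B$; $U\subseteq B$ is a transversal if $U\cap V\neq\emptyset$ for every $V\in\mathcal{B}$. *)

(* Defs.v *)
From mathcomp Require Import all_boot.
Set Implicit Arguments. Unset Strict Implicit. Unset Printing Implicit Defensive.

Section Closure.
Variable X : finType.

Definition imp := ({set X} * X)%type.

(* closure system: contains X and closed under (finite, nonempty) intersections;
   on a finite set this is the same as closure under arbitrary intersections
   (the empty intersection being X). *)
Definition closure_system (F : {set {set X}}) : Prop :=
  [set: X] \in F /\ (forall A B, A \in F -> B \in F -> A :&: B \in F).

Definition phi (F : {set {set X}}) (Y : {set X}) : {set X} :=
  \bigcap_(Z in F | Y \subset Z) Z.

Definition holds (i : imp) (Y : {set X}) : bool := ~~ (i.1 \subset Y) || (i.2 \in Y).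

Definition is_basis (S : {set imp}) (G : {set {set X}}) : Prop :=
  forall Y : {set X}, (Y \in G) = [forall i in S, holds i Y].

Definition is_direct_basis (S : {set imp}) (G : {set {set X}}) : Prop :=
  is_basis S G /\
  forall Y : {set X}, phi G Y = Y :|: [set d | [exists C : {set X}, ((C, d) \in S) && (C \subset Y)]].

Definition canonical_direct_basis (F : {set {set X}}) : {set imp} :=
  [set i : imp | [&& i.2 \notin i.1, i.2 \in phi F i.1 &
                  [forall C' : {set X}, (C' \proper i.1) ==> (i.2 \notin phi F C')]]].

Definition upper_cover (F : {set {set X}}) (A B : {set X}) : Prop :=
  [/\ B \in F, A \proper B &
      forall Z, Z \in F -> A \proper Z -> Z \proper B -> False].

Definition meet_irreducible (F : {set {set X}}) (A : {set X}) : Prop :=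
  [/\ A \in F, A != [set: X] & exists! B, upper_cover F A B].

Definition transversal (B : {set X}) (calB : {set {set X}}) (U : {set X}) : Prop :=
  U \subset B /\ forall V, V \in calB -> U :&: V != set0.

Definition minimal_transversal (B : {set X}) (calB : {set {set X}}) (U : {set X}) : Prop :=
  transversal B calB U /\ forall U', transversal B calB U' -> U' \subset U -> U' = U.

Definition hyperedges (F : {set {set X}}) (A : {set X}) : {set {set X}} :=
  [set A :\: Z | Z in [set Z in F | Z \proper A]].

End Closure.

(* Main.v *)
Require Import Defs.
From mathcomp Require Import all_boot.
Set Implicit Arguments. Unset Strict Implicit. Unset Printing Implicit Defensive.

Section L.
Variable X : finType.
Implicit Types (F G : {set {set X}}) (Y Z C : {set X}).

Lemma phiP G Y x : reflect (forall Z, Z \in G -> Y \subset Z -> x \in Z) (x \in phi G Y).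
Proof.
apply: (iffP bigcapP) => H Z.
  by move=> ZG YZ; apply: H; rewrite ZG YZ.
by case/andP; apply: H.
Qed.

Lemma phi_ext G Y : Y \subset phi G Y.
Proof. by apply/subsetP=> x xY; apply/phiP=> Z _ /subsetP; apply. Qed.

Lemma phi_min G Y Z : Z \in G -> Y \subset Z -> phi G Y \subset Z.
Proof. by move=> ZG YZ; apply/subsetP=> x /phiP; apply. Qed.

Lemma phi_in F Y : closure_system F -> phi F Y \in F.
Proof.
case=> FT FI; rewrite /phi; elim/big_ind: _ => //.
by move=> i /andP[].
Qed.

Lemma phi_mono F Y Y' : closure_system F -> Y \subset Y' -> phi F Y \subset phi F Y'.
Proof.
move=> cF YY; apply: phi_min; first exact: phi_in.
exact: subset_trans YY (phi_ext _ _).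
Qed.

Lemma phi_fix F Z : Z \in F -> phi F Z = Z.
Proof. by move=> ZF; apply/eqP; rewrite eqEsubset phi_min // phi_ext. Qed.

Lemma cdb_direct F Y : closure_system F ->
  phi F Y = Y :|: [set d | [exists C : {set X}, ((C, d) \in canonical_direct_basis F) && (C \subset Y)]].
Proof.
move=> cF; apply/setP=> x; rewrite !inE.
apply/idP/idP.
  move=> xp; case xY: (x \in Y) => //=.
  have P0 : (Y \subset Y) && (x \in phi F Y) by rewrite subxx.
  have [C /minsetP [/andP [CY xC] Cmin]] := @ex_minset _ (fun C => (C \subset Y) && (x \in phi F C)) (ex_intro _ Y P0).
  apply/existsP; exists C; rewrite CY andbT inE /= xC /=.
  apply/andP; split.
    apply: contraFN xY => xC'; exact: (subsetP CY).
  apply/forallP=> C'; apply/implyP=> CC'; apply/negP=> xC'.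
  have := Cmin C'; rewrite xC' (subset_trans (proper_sub CC') CY) => /(_ isT (proper_sub CC')) E.
  by move: CC'; rewrite E properE subxx andbF.
case/orP; first by move/(subsetP (phi_ext _ _)).
case/existsP=> C /andP []; rewrite inE /= => /and3P [_ xC _] CY.
exact: (subsetP (phi_mono cF CY)).
Qed.
End L.

Section M.
Variables (X : finType) (F : {set {set X}}) (A Astar : {set X}) (Ys : {set {set X}}).
Implicit Types (Y Z T : {set X}).
Hypothesis cF : closure_system F.
Hypothesis mi : meet_irreducible F A.
Hypothesis uc : upper_cover F A Astar.
Hypothesis HY : forall Y, Y \in Ys <-> minimal_transversal A (hyperedges F A) Y.

Lemma AF : A \in F. Proof. by case: mi. Qed.
Lemma AAs : A \proper Astar. Proof. by case: uc. Qed.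
Lemma AsF : Astar \in F. Proof. by case: uc. Qed.

Lemma cover_below Z : Z \in F -> A \proper Z -> Astar \subset Z.
Proof.
move=> ZF AZ.
have P0 : [&& Z \in F, A \proper Z & Z \subset Z] by rewrite ZF AZ subxx.
have [W /minsetP [/and3P [WF AW WZ] Wmin]] :=
  @ex_minset _ (fun W => [&& W \in F, A \proper W & W \subset Z]) (ex_intro _ Z P0).
have ucW : upper_cover F A W.
  split=> // Z' Z'F AZ' Z'W.
  have := Wmin Z'; rewrite Z'F AZ' (subset_trans (proper_sub Z'W) WZ).
  move=> /(_ isT (proper_sub Z'W)) E.
  by move: Z'W; rewrite E properE subxx andbF.
case: mi => _ _ [B [_ Bu]].
by rewrite -(Bu _ uc) (Bu _ ucW).
Qed.

Lemma phiS_neq Y : phi F Y != A -> phi (F :\ A) Y = phi F Y.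
Proof.
move=> ne; apply/eqP; rewrite eqEsubset; apply/andP; split.
  by apply: phi_min; [rewrite !inE ne phi_in | exact: phi_ext].
apply/subsetP=> x /phiP H; apply/phiP=> Z ZF YZ; apply: H => //.
by move: ZF; rewrite !inE => /andP[].
Qed.

Lemma phiS_eq Y : phi F Y = A -> phi (F :\ A) Y = Astar.
Proof.
move=> E; apply/eqP; rewrite eqEsubset; apply/andP; split.
  apply: phi_min.
    by rewrite !inE AsF andbT; apply: contraTneq AAs => ->; rewrite properE subxx andbF.
  by rewrite (subset_trans (phi_ext F Y)) // E (proper_sub AAs).
apply/subsetP=> x xA; apply/phiP=> Z; rewrite !inE => /andP [ZA ZF] YZ.
apply: (subsetP (cover_below ZF _)) => //.
by rewrite properEneq eq_sym ZA -E phi_min.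
Qed.

Lemma phiS_in Y : phi (F :\ A) Y \in F :\ A.
Proof.
case: (eqVneq (phi F Y) A) => [E|ne].
  rewrite phiS_eq // !inE AsF andbT.
  by apply: contraTneq AAs => ->; rewrite properE subxx andbF.
by rewrite phiS_neq // !inE ne phi_in.
Qed.

Lemma transv_sub T Y : T \in Ys -> T \subset Y -> A \subset phi F Y.
Proof.
move=> /HY [[TA Ttr] _] TY.
set W := phi F Y :&: A.
have WF : W \in F by case: cF => _ FI; apply: FI => //; [exact: phi_in | exact: AF].
case: (eqVneq W A) => [E|ne]; first by rewrite -E subsetIl.
have WA : W \proper A by rewrite properEneq ne subsetIr.
have := Ttr (A :\: W); rewrite [_ \in hyperedges _ _](_ : _ = true).
  move=> /(_ isT) /set0Pn [x]; rewrite !inE => /andP [xT /andP [xW _]].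
  case/negP: xW; rewrite (subsetP TA) // andbT.
  exact: (subsetP (phi_ext F Y)) (subsetP TY _ xT).
apply/imsetP; exists W => //; by rewrite inE WF WA.
Qed.

Definition tb (U : {set X}) := (U \subset A) && [forall V in hyperedges F A, U :&: V != set0].

Lemma tbP U : reflect (Defs.transversal A (hyperedges F A) U) (tb U).
Proof.
apply: (iffP andP) => [[UA /forall_inP H]|[UA H]]; split => //.
by apply/forall_inP.
Qed.

Lemma exists_T Y : phi F Y = A -> exists T, (T \in Ys) && (T \subset Y).
Proof.
move=> E.
have tY : tb Y.
  apply/tbP; split; first by rewrite -E phi_ext.
  move=> V /imsetP [Z]; rewrite inE => /andP [ZF ZA] ->.
  apply/negP => /eqP H.
  have YZ : Y \subset Z.
    apply/subsetP=> y yY; apply: contraT => yZ.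
    have : y \in Y :&: (A :\: Z).
      by rewrite !inE yZ yY /= -E; exact: (subsetP (phi_ext F Y)).
    by rewrite H inE.
  move: (phi_min ZF YZ); rewrite E => AZ.
  by move: ZA; rewrite properE AZ andbF.
have [T /minsetP [tT Tmin] TY] := minset_exists tY.
exists T; rewrite TY andbT; apply/HY; split; first exact/tbP.
by move=> U' /tbP tU' U'T; apply: Tmin.
Qed.

Definition SS := canonical_direct_basis F :|:
       [set i : imp X | (i.1 \in Ys) && (i.2 \in Astar :\: A)].

Definition addS Y := [set d | [exists C : {set X}, ((C, d) \in SS) && (C \subset Y)]].
Definition addC Y := [set d | [exists C : {set X}, ((C, d) \in canonical_direct_basis F) && (C \subset Y)]].

Lemma addS_P Y x : (x \in addS Y) = (x \in addC Y) || ((x \in Astar :\: A) && [exists T, (T \in Ys) && (T \subset Y)]).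
Proof.
rewrite !inE; apply/existsP/orP.
  case=> C; rewrite !inE /= => /andP [/orP [H|/andP [CY xA]] CY'].
    by left; apply/existsP; exists C; rewrite CY' andbT inE.
  by right; rewrite xA; apply/existsP; exists C; rewrite CY CY'.
case=> [/existsP [C /andP [H CY]]|/andP [xA /existsP [T /andP [TY TY']]]].
  by exists C; rewrite /SS in_setU H CY.
by exists T; rewrite /SS in_setU [X in _ || X]inE /= TY TY' andbT; apply/orP; right; rewrite inE.
Qed.

Lemma directS Y : phi (F :\ A) Y = Y :|: addS Y.
Proof.
apply/setP=> x; rewrite inE addS_P orbA.
have -> : ((x \in Y) || (x \in addC Y)) = (x \in phi F Y).
  by rewrite (cdb_direct Y cF) in_setU.
case: (eqVneq (phi F Y) A) => [E|ne].
  rewrite phiS_eq // E.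
  have [T TY] := exists_T E.
  have -> : [exists T, (T \in Ys) && (T \subset Y)] by apply/existsP; exists T.
  rewrite andbT !inE; case xA: (x \in A); rewrite /= ?orbT ?andbT //=.
  by rewrite (subsetP (proper_sub AAs)).
rewrite phiS_neq //.
case xP: (x \in phi F Y) => //=.
apply/esym/negbTE; rewrite negb_and; case: existsP => [[T /andP [TY TY']]|_]; last by rewrite orbT.
rewrite /= orbF; apply: contraFN xP => /setDP [xAs _].
have Asub : A \subset phi F Y := transv_sub TY TY'.
apply: (subsetP (cover_below (phi_in Y cF) _)) => //.
by rewrite properEneq eq_sym ne Asub.
Qed.

Lemma basisS : is_basis SS (F :\ A).
Proof.
move=> Y.
have E1 : (Y \in F :\ A) = (phi (F :\ A) Y \subset Y).
  apply/idP/idP => [YF|PY]; first exact: phi_min.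
  have -> : Y = phi (F :\ A) Y by apply/eqP; rewrite eqEsubset PY phi_ext.
  exact: phiS_in.
rewrite E1 directS subUset subxx /=.
apply/subsetP/forall_inP => [H [C d] iS|H d].
  rewrite /holds /=; case CY: (C \subset Y) => //=; apply: H; rewrite inE.
  by apply/existsP; exists C; rewrite iS CY.
rewrite inE => /existsP [C /andP [iS CY]].
by have := H _ iS; rewrite /holds /= CY.
Qed.

End M.

Theorem mainTheorem7 (X : finType) (F : {set {set X}}) (A Astar : {set X})
  (Ys : {set {set X}}) :
  closure_system F ->
  meet_irreducible F A ->
  upper_cover F A Astar ->
  (forall Y, Y \in Ys <-> minimal_transversal A (hyperedges F A) Y) ->
  is_direct_basis
    (canonical_direct_basis F :|:
       [set i : imp X | (i.1 \in Ys) && (i.2 \in Astar :\: A)])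
    (F :\ A).
Proof.
move=> cF mi uc HY; split; first exact: (basisS cF mi uc HY).
exact: (directS cF mi uc HY).
Qed.
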